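(* For a unitary boundary triple $\{\mathcal H,\Gamma_0,\Gamma_1\}$ for $A^*$ with $A_*=\operatorname{dom}\Gamma$, the following are equivalent: (i) $\Gamma_0:A_*\to\mathcal H$ is bounded (with respect to the norm of $\mathfrak H^2$) and $\operatorname{ran}\Gamma_0=\mathcal H$; (ii) $\Gamma_1:A_*\to\mathcal H$ is bounded and $\operatorname{ran}\Gamma_1=\mathcal H$; (iii) $\{\mathcal H,\Gamma_0,\Gamma_1\}$ is an ordinary boundary triple for $A^*$. *)

(* Defs.v *)
From Stdlib Require Import Reals.
From Coquelicot Require Import Coquelicot.
Open Scope R_scope.

Record CHilbert := {
  hs :> Type;
  h0 : hs;
  hadd : hs -> hs -> hs;
  hopp : hs -> hs;
  hscal : C -> hs -> hs;
  hip : hs -> hs -> C;   (* inner product, linear in the first argument *)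
  hadd_assoc : forall x y z, hadd x (hadd y z) = hadd (hadd x y) z;
  hadd_comm : forall x y, hadd x y = hadd y x;
  hadd_0 : forall x, hadd x h0 = x;
  hadd_opp : forall x, hadd x (hopp x) = h0;
  hscal_assoc : forall a b x, hscal a (hscal b x) = hscal (Cmult a b) x;
  hscal_1 : forall x, hscal (RtoC 1) x = x;
  hscal_distr_l : forall a x y, hscal a (hadd x y) = hadd (hscal a x) (hscal a y);
  hscal_distr_r : forall a b x, hscal (Cplus a b) x = hadd (hscal a x) (hscal b x);
  hip_add_l : forall x y z, hip (hadd x y) z = Cplus (hip x z) (hip y z);
  hip_scal_l : forall a x y, hip (hscal a x) y = Cmult a (hip x y);
  hip_conj : forall x y, hip x y = Cconj (hip y x);
  hip_pos : forall x, 0 <= Re (hip x x);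
  hip_definite : forall x, hip x x = RtoC 0 -> x = h0;
  hcomplete : forall u : nat -> hs,
    (forall eps, 0 < eps -> exists N, forall m n, (N <= m)%nat -> (N <= n)%nat ->
       sqrt (Re (hip (hadd (u n) (hopp (u m))) (hadd (u n) (hopp (u m))))) < eps) ->
    exists l, forall eps, 0 < eps -> exists N, forall n, (N <= n)%nat ->
       sqrt (Re (hip (hadd (u n) (hopp l)) (hadd (u n) (hopp l)))) < eps
}.

Arguments h0 {_}. Arguments hadd {_}. Arguments hopp {_}.
Arguments hscal {_}. Arguments hip {_}.

Definition hnorm {H : CHilbert} (x : H) : R := sqrt (Re (hip x x)).
Definition hsub {H : CHilbert} (x y : H) : H := hadd x (hopp y).

Definition lrel (H : CHilbert) := (H * H)%type -> Prop.

Definition pnorm {H : CHilbert} (f : H * H) : R :=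
  sqrt (hnorm (fst f) ^ 2 + hnorm (snd f) ^ 2).
Definition psub {H : CHilbert} (f g : H * H) : H * H :=
  (hsub (fst f) (fst g), hsub (snd f) (snd g)).
Definition padd {H : CHilbert} (f g : H * H) : H * H :=
  (hadd (fst f) (fst g), hadd (snd f) (snd g)).
Definition pscal {H : CHilbert} (a : C) (f : H * H) : H * H :=
  (hscal a (fst f), hscal a (snd f)).

Definition is_subspace {H : CHilbert} (T : lrel H) : Prop :=
  T (h0, h0) /\
  (forall f g, T f -> T g -> T (padd f g)) /\
  (forall a f, T f -> T (pscal a f)).

Definition pclosure {H : CHilbert} (T : lrel H) : lrel H :=
  fun f => forall eps, 0 < eps -> exists g, T g /\ pnorm (psub f g) < eps.

Definition is_closed {H : CHilbert} (T : lrel H) : Prop :=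
  forall f, pclosure T f -> T f.

Definition adjoint {H : CHilbert} (T : lrel H) : lrel H :=
  fun f => forall g, T g -> hip (snd f) (fst g) = hip (fst f) (snd g).

Definition closed_symmetric {H : CHilbert} (A : lrel H) : Prop :=
  is_subspace A /\ is_closed A /\ (forall f, A f -> adjoint A f).

(** * Krein-space structure on h^2 : up to the constant factor -i, the
    fundamental form is  [f^, g^] = (f', g) - (f, g')  (same convention used
    on both sides, so the factor is irrelevant for (J-)unitarity). *)
Definition kform {H : CHilbert} (f g : H * H) : C :=
  Cplus (hip (snd f) (fst g)) (Copp (hip (fst f) (snd g))).

(** Gamma = (Gamma0, Gamma1) with domain Astar (= A_* = dom Gamma), viewed
    as a single-valued linear relation from h^2 to H^2. *)
Definition Gamma_graph {h K : CHilbert} (Astar : lrel h) (G0 G1 : h * h -> K)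
  (f : h * h) (k : K * K) : Prop := Astar f /\ k = (G0 f, G1 f).

Definition Gamma_Kadj {h K : CHilbert} (Astar : lrel h) (G0 G1 : h * h -> K)
  (k : K * K) (f : h * h) : Prop :=
  forall g, Astar g -> kform (G0 g, G1 g) k = kform g f.

Definition Gamma_unitary {h K : CHilbert} (Astar : lrel h) (G0 G1 : h * h -> K)
  : Prop :=
  forall k f, Gamma_Kadj Astar G0 G1 k f <-> Gamma_graph Astar G0 G1 f k.

Definition unitary_boundary_triple {h : CHilbert} (A : lrel h) (K : CHilbert)
  (Astar : lrel h) (G0 G1 : h * h -> K) : Prop :=
  is_subspace Astar /\
  (forall a f g, Astar f -> Astar g ->
     G0 (padd (pscal a f) g) = hadd (hscal a (G0 f)) (G0 g) /\
     G1 (padd (pscal a f) g) = hadd (hscal a (G1 f)) (G1 g)) /\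
  Gamma_unitary Astar G0 G1 /\
  (forall f, pclosure Astar f <-> adjoint A f).

Definition ordinary_boundary_triple {h : CHilbert} (A : lrel h) (K : CHilbert)
  (Astar : lrel h) (G0 G1 : h * h -> K) : Prop :=
  (forall f, Astar f <-> adjoint A f) /\
  (forall a f g, adjoint A f -> adjoint A g ->
     G0 (padd (pscal a f) g) = hadd (hscal a (G0 f)) (G0 g) /\
     G1 (padd (pscal a f) g) = hadd (hscal a (G1 f)) (G1 g)) /\
  (forall f g, adjoint A f -> adjoint A g ->
     Cplus (hip (snd f) (fst g)) (Copp (hip (fst f) (snd g))) =
     Cplus (hip (G1 f) (G0 g)) (Copp (hip (G0 f) (G1 g)))) /\
  (forall k0 k1 : K, exists f, adjoint A f /\ G0 f = k0 /\ G1 f = k1).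

Definition bounded_on {h K : CHilbert} (Astar : lrel h) (G : h * h -> K) : Prop :=
  exists c, forall f, Astar f -> hnorm (G f) <= c * pnorm f.

Definition range_full {h K : CHilbert} (Astar : lrel h) (G : h * h -> K) : Prop :=
  forall k : K, exists f, Astar f /\ G f = k.

(* Main.v *)
Require Import Defs.
From Stdlib Require Import Reals.
From Coquelicot Require Import Coquelicot.
From Stdlib Require Import Lra Psatz ZArith IndefiniteDescription Classical.
Open Scope R_scope.

Arguments hadd_assoc {_}. Arguments hadd_comm {_}. Arguments hadd_0 {_}.
Arguments hadd_opp {_}. Arguments hscal_assoc {_}. Arguments hscal_1 {_}.
Arguments hscal_distr_l {_}. Arguments hscal_distr_r {_}. Arguments hip_add_l {_}.
Arguments hip_scal_l {_}. Arguments hip_conj {_}. Arguments hip_pos {_}.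
Arguments hip_definite {_}. Arguments hcomplete {_}.

Lemma Cconj_R (r : R) : Cconj (RtoC r) = RtoC r.
Proof. unfold Cconj, RtoC; simpl; f_equal; lra. Qed.

Section Basic.
Context {H : CHilbert}.

Lemma hadd_0l (x : H) : hadd h0 x = x.
Proof. rewrite hadd_comm; apply hadd_0. Qed.

Lemma hadd_opp_l (x : H) : hadd (hopp x) x = h0.
Proof. rewrite hadd_comm; apply hadd_opp. Qed.

Lemma hadd_self_0 (a : H) : hadd a a = a -> a = h0.
Proof.
  intro E. rewrite <- (hadd_opp a). rewrite <- E at 2.
  rewrite <- hadd_assoc, hadd_opp, hadd_0. reflexivity.
Qed.

Lemma hscal_0 (x : H) : hscal (RtoC 0) x = h0.
Proof.
  apply hadd_self_0. rewrite <- hscal_distr_r. f_equal.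
  unfold Cplus, RtoC; simpl; f_equal; lra.
Qed.

Lemma hopp_scal (x : H) : hopp x = hscal (Copp (RtoC 1)) x.
Proof.
  rewrite <- (hadd_0 (hopp x)).
  assert (E : hadd x (hscal (Copp (RtoC 1)) x) = h0).
  { rewrite <- (hscal_1 x) at 1. rewrite <- hscal_distr_r.
    replace (Cplus (RtoC 1) (Copp (RtoC 1))) with (RtoC 0).
    apply hscal_0. unfold Cplus, Copp, RtoC; simpl; f_equal; lra. }
  rewrite <- E, hadd_assoc, hadd_opp_l, hadd_0l. reflexivity.
Qed.

Lemma hip_0_l (y : H) : hip h0 y = RtoC 0.
Proof. rewrite <- (hscal_0 h0), hip_scal_l. ring. Qed.

Lemma hip_add_r (x y z : H) : hip x (hadd y z) = Cplus (hip x y) (hip x z).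
Proof.
  rewrite hip_conj, hip_add_l, Cplus_conj, <- !hip_conj. reflexivity.
Qed.

Lemma hip_scal_r (a : C) (x y : H) : hip x (hscal a y) = Cmult (Cconj a) (hip x y).
Proof.
  rewrite hip_conj, hip_scal_l, Cmult_conj, <- hip_conj. reflexivity.
Qed.

Lemma hip_0_r (y : H) : hip y h0 = RtoC 0.
Proof. rewrite hip_conj, hip_0_l. apply Cconj_R. Qed.

Lemma hip_opp_l (x y : H) : hip (hopp x) y = Copp (hip x y).
Proof. rewrite hopp_scal, hip_scal_l. ring. Qed.

Lemma hip_opp_r (x y : H) : hip x (hopp y) = Copp (hip x y).
Proof. rewrite hopp_scal, hip_scal_r, Copp_conj, Cconj_R. ring. Qed.

Lemma veq (x y : H) : hip (hsub x y) (hsub x y) = RtoC 0 -> x = y.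
Proof.
  intro E. apply hip_definite in E. unfold hsub in E.
  rewrite <- (hadd_0 x), <- (hadd_opp_l y), hadd_assoc, E, hadd_0l. reflexivity.
Qed.

End Basic.

Ltac hexp := unfold hsub in *;
  repeat rewrite ?hip_add_l, ?hip_add_r, ?hip_scal_l, ?hip_scal_r, ?hip_opp_l,
    ?hip_opp_r, ?hip_0_l, ?hip_0_r, ?Cconj_R, ?Copp_conj, ?Cconj_conj.

Ltac veqt := apply veq; hexp; ring.

Section Test.
Context {H : CHilbert}.
Lemma test (x y z : H) : hsub (hadd x y) z = hadd y (hsub x z).
Proof. veqt. Qed.
End Test.

Section Norms.
Context {H : CHilbert}.

Definition nsq (x : H) : R := Re (hip x x).

Lemma hip_xx (x : H) : hip x x = RtoC (nsq x).
Proof.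
  unfold nsq. pose proof (hip_conj x x) as E.
  destruct (hip x x) as [a b] eqn:Ex. unfold Cconj in E; simpl in E.
  injection E; intros Hb. unfold RtoC; simpl. f_equal. lra.
Qed.

Lemma nsq_ge0 (x : H) : 0 <= nsq x.
Proof. apply hip_pos. Qed.

Lemma nsq_0 (x : H) : nsq x = 0 -> x = h0.
Proof. intro E. apply hip_definite. rewrite hip_xx, E. reflexivity. Qed.

Lemma nsq_h0 : nsq (h0 : H) = 0.
Proof. unfold nsq. rewrite hip_0_l. reflexivity. Qed.

Lemma hnorm_sq (x : H) : hnorm x * hnorm x = nsq x.
Proof. unfold hnorm. apply sqrt_sqrt, nsq_ge0. Qed.

Lemma hnorm_ge0 (x : H) : 0 <= hnorm x.
Proof. apply sqrt_pos. Qed.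

Lemma hnorm_h0 : hnorm (h0 : H) = 0.
Proof. unfold hnorm. fold (nsq (h0:H)). rewrite nsq_h0. apply sqrt_0. Qed.

Lemma hnorm_0 (x : H) : hnorm x = 0 -> x = h0.
Proof. intro E. apply nsq_0. rewrite <- hnorm_sq, E. ring. Qed.

Lemma le_of_sq (a b : R) : 0 <= b -> a * a <= b * b -> a <= b.
Proof. intros. nra. Qed.

Lemma hnorm_le (x : H) (r : R) : 0 <= r -> nsq x <= r * r -> hnorm x <= r.
Proof. intros. apply le_of_sq; auto. rewrite hnorm_sq. auto. Qed.

Lemma CS (x y : H) : Cmod (hip x y) <= hnorm x * hnorm y.
Proof.
  destruct (Req_dec (nsq y) 0) as [E|E].
  - apply nsq_0 in E. subst. rewrite hip_0_r, hnorm_h0, Cmod_0. lra.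
  - assert (Hn : 0 < nsq y) by (pose proof (nsq_ge0 y); lra).
    set (c := hip x y).
    set (t := Cdiv c (RtoC (nsq y))).
    assert (Hv : hip (hsub x (hscal t y)) (hsub x (hscal t y)) =
                 RtoC (nsq x - Cmod c ^ 2 / nsq y)).
    { hexp. rewrite (hip_conj y x). fold c. rewrite !hip_xx.
      unfold t. rewrite Cdiv_conj, Cconj_R.
      rewrite RtoC_minus, RtoC_div, Cmod2_conj. field.
      intro K. apply E. injection K. auto. lra. intro K; apply E; injection K; auto. }
    pose proof (nsq_ge0 (hsub x (hscal t y))) as P. unfold nsq at 1 in P.
    rewrite Hv in P. simpl in P.
    apply le_of_sq. apply Rmult_le_pos; apply hnorm_ge0.
    replace (hnorm x * hnorm y * (hnorm x * hnorm y)) with (nsq x * nsq y)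
      by (rewrite <- !hnorm_sq; ring).
    assert (Cmod c ^ 2 / nsq y * nsq y <= nsq x * nsq y) by nra.
    replace (Cmod c ^ 2 / nsq y * nsq y) with (Cmod c ^ 2) in H0 by (field; lra).
    fold c. nra.
Qed.

Lemma Re_le_Cmod (z : C) : Re z <= Cmod z.
Proof. pose proof (re_le_Cmod z). pose proof (Rle_abs (Re z)). lra. Qed.

Lemma hnorm_triangle (x y : H) : hnorm (hadd x y) <= hnorm x + hnorm y.
Proof.
  apply hnorm_le. pose proof (hnorm_ge0 x); pose proof (hnorm_ge0 y); lra.
  assert (E : hip (hadd x y) (hadd x y) =
     Cplus (Cplus (hip x x) (hip y y)) (Cplus (hip x y) (Cconj (hip x y)))).
  { hexp. rewrite (hip_conj y x). ring. }
  unfold nsq at 1. rewrite E.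
  assert (Re (Cplus (Cplus (hip x x) (hip y y)) (Cplus (hip x y) (Cconj (hip x y))))
          = nsq x + nsq y + 2 * Re (hip x y)).
  { unfold nsq. destruct (hip x x), (hip y y), (hip x y). unfold Cplus, Cconj, Re; simpl. lra. }
  rewrite H0. pose proof (Re_le_Cmod (hip x y)). pose proof (CS x y).
  rewrite <- !hnorm_sq. nra.
Qed.

Lemma nsq_scal (a : C) (x : H) : nsq (hscal a x) = Cmod a ^ 2 * nsq x.
Proof.
  unfold nsq at 1. rewrite hip_scal_l, hip_scal_r, hip_xx.
  replace (Cmult a (Cmult (Cconj a) (RtoC (nsq x)))) with
    (Cmult (Cmult a (Cconj a)) (RtoC (nsq x))) by ring.
  rewrite <- Cmod2_conj, <- RtoC_mult. reflexivity.
Qed.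

Lemma hnorm_scal (a : C) (x : H) : hnorm (hscal a x) = Cmod a * hnorm x.
Proof.
  unfold hnorm. fold (nsq (hscal a x)) (nsq x). rewrite nsq_scal.
  rewrite sqrt_mult_alt. rewrite sqrt_pow2. reflexivity. apply Cmod_ge_0.
  pose proof (Cmod_ge_0 a); nra.
Qed.

Lemma hnorm_opp (x : H) : hnorm (hopp x) = hnorm x.
Proof. rewrite hopp_scal, hnorm_scal, Cmod_opp, Cmod_1. ring. Qed.

Lemma hnorm_sub_sym (x y : H) : hnorm (hsub x y) = hnorm (hsub y x).
Proof.
  replace (hsub x y) with (hopp (hsub y x)) by veqt. apply hnorm_opp.
Qed.

Lemma hnorm_sub_tri (x y z : H) : hnorm (hsub x z) <= hnorm (hsub x y) + hnorm (hsub y z).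
Proof.
  replace (hsub x z) with (hadd (hsub x y) (hsub y z)) by veqt.
  apply hnorm_triangle.
Qed.

Lemma Ceq_of_small (a b : C) : (forall eps, 0 < eps -> Cmod (Cminus a b) <= eps) -> a = b.
Proof.
  intro K. assert (Cmod (Cminus a b) = 0).
  { pose proof (Cmod_ge_0 (Cminus a b)).
    destruct (Req_dec (Cmod (Cminus a b)) 0); auto.
    specialize (K (Cmod (Cminus a b) / 2)). lra. }
  apply Cmod_eq_0 in H0. replace a with (Cplus (Cminus a b) b) by ring.
  rewrite H0. ring.
Qed.

End Norms.

Lemma sqrt_plus_le (a b : R) : 0 <= a -> 0 <= b -> sqrt (a + b) <= sqrt a + sqrt b.
Proof.
  intros. apply le_of_sq. pose proof (sqrt_pos a); pose proof (sqrt_pos b); lra.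
  rewrite sqrt_sqrt by lra.
  pose proof (sqrt_sqrt a H); pose proof (sqrt_sqrt b H0).
  pose proof (sqrt_pos a); pose proof (sqrt_pos b). nra.
Qed.

Lemma sqrt_mono_lt (a b e : R) : 0 <= a -> a <= b -> sqrt b < e -> sqrt a < e.
Proof. intros. pose proof (sqrt_le_1_alt a b H0). lra. Qed.

Section Prod.
Variable h : CHilbert.

Definition pip (f g : h * h) : C := Cplus (hip (fst f) (fst g)) (hip (snd f) (snd g)).

Lemma Re_Cplus (u v : C) : Re (Cplus u v) = Re u + Re v.
Proof. reflexivity. Qed.

Lemma pip_xx (f : h * h) : Re (pip f f) = nsq (fst f) + nsq (snd f).
Proof. reflexivity. Qed.

Definition prodH : CHilbert.
Proof.
  refine (Build_CHilbert (h * h) (h0, h0)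
    (fun f g => (hadd (fst f) (fst g), hadd (snd f) (snd g)))
    (fun f => (hopp (fst f), hopp (snd f)))
    (fun a f => (hscal a (fst f), hscal a (snd f)))
    pip _ _ _ _ _ _ _ _ _ _ _ _ _ _).
  - intros [] [] []; simpl; f_equal; apply hadd_assoc.
  - intros [] []; simpl; f_equal; apply hadd_comm.
  - intros []; simpl; f_equal; apply hadd_0.
  - intros []; simpl; f_equal; apply hadd_opp.
  - intros a b []; simpl; f_equal; apply hscal_assoc.
  - intros []; simpl; f_equal; apply hscal_1.
  - intros a [] []; simpl; f_equal; apply hscal_distr_l.
  - intros a b []; simpl; f_equal; apply hscal_distr_r.
  - intros [] [] []; unfold pip; simpl. rewrite !hip_add_l. ring.
  - intros a [] []; unfold pip; simpl. rewrite !hip_scal_l. ring.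
  - intros [] []; unfold pip; simpl. rewrite Cplus_conj, <- !hip_conj. reflexivity.
  - intros f. rewrite pip_xx. pose proof (nsq_ge0 (fst f)); pose proof (nsq_ge0 (snd f)); lra.
  - intros [x y] E. assert (E2 := f_equal Re E). rewrite pip_xx in E2. simpl in E2.
    pose proof (nsq_ge0 x); pose proof (nsq_ge0 y).
    f_equal; apply nsq_0; lra.
  - intros u Hc.
    assert (C1 : forall eps, 0 < eps -> exists N, forall m n, (N <= m)%nat -> (N <= n)%nat ->
       sqrt (Re (hip (hadd (fst (u n)) (hopp (fst (u m)))) (hadd (fst (u n)) (hopp (fst (u m)))))) < eps).
    { intros eps He. destruct (Hc eps He) as [N HN]. exists N. intros m n Hm Hn.
      specialize (HN m n Hm Hn). simpl in HN. 
      eapply sqrt_mono_lt; [| |exact HN]; pose proof (nsq_ge0 (hadd (snd (u n)) (hopp (snd (u m)))));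
      pose proof (nsq_ge0 (hadd (fst (u n)) (hopp (fst (u m))))); unfold nsq, Re in *; lra. }
    assert (C2 : forall eps, 0 < eps -> exists N, forall m n, (N <= m)%nat -> (N <= n)%nat ->
       sqrt (Re (hip (hadd (snd (u n)) (hopp (snd (u m)))) (hadd (snd (u n)) (hopp (snd (u m)))))) < eps).
    { intros eps He. destruct (Hc eps He) as [N HN]. exists N. intros m n Hm Hn.
      specialize (HN m n Hm Hn). simpl in HN.
      eapply sqrt_mono_lt; [| |exact HN]; pose proof (nsq_ge0 (hadd (snd (u n)) (hopp (snd (u m)))));
      pose proof (nsq_ge0 (hadd (fst (u n)) (hopp (fst (u m))))); unfold nsq, Re in *; lra. }
    destruct (hcomplete (fun n => fst (u n)) C1) as [l1 L1].
    destruct (hcomplete (fun n => snd (u n)) C2) as [l2 L2].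
    exists (l1, l2). intros eps He.
    destruct (L1 (eps/2) ltac:(lra)) as [N1 HN1].
    destruct (L2 (eps/2) ltac:(lra)) as [N2 HN2].
    exists (Nat.max N1 N2). intros n Hn.
    specialize (HN1 n ltac:(lia)). specialize (HN2 n ltac:(lia)).
    simpl. unfold Re in *. eapply Rle_lt_trans. apply sqrt_plus_le.
    apply (nsq_ge0 (hadd (fst (u n)) (hopp l1))). apply (nsq_ge0 (hadd (snd (u n)) (hopp l2))).
    lra.
Defined.

Lemma pnorm_eq (f : h * h) : pnorm f = hnorm (H := prodH) f.
Proof.
  unfold pnorm. unfold hnorm at 3. simpl. f_equal.
  rewrite !Rmult_1_r, !hnorm_sq. reflexivity.
Qed.

End Prod.

Lemma le_eps (a b : R) : (forall eps, 0 < eps -> a <= b + eps) -> a <= b.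
Proof. intro K. apply Rnot_lt_le. intro L. specialize (K ((a - b)/2) ltac:(lra)). lra. Qed.

Lemma pow43 (n : nat) : 1 + INR n / 3 <= (4/3) ^ n.
Proof.
  induction n. simpl; lra. rewrite S_INR. simpl.
  pose proof (pos_INR n). nra.
Qed.

Lemma Cmod_hip_sym {H : CHilbert} (x y : H) : Cmod (hip x y) = Cmod (hip y x).
Proof. rewrite (hip_conj x y). apply Cmod_conj. Qed.

Section UBP.
Context {H : CHilbert}.
Variable Sset : H -> Prop.
Hypothesis Hw : forall k, exists M, forall y, Sset y -> Cmod (hip y k) <= M.

Section Contra.
Variable y : nat -> H.
Hypothesis Hy : forall n, Sset (y n) /\ 4 ^ n < hnorm (y n).

Let yp n : 0 < hnorm (y n).
Proof. destruct (Hy n). pose proof (pow_lt 4 n ltac:(lra)). lra. Qed.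

Let u n : H := hscal (RtoC (/ hnorm (y n))) (y n).
Let r n : R := (/3) ^ (S n).

Lemma r_pos n : 0 < r n.
Proof. unfold r. apply pow_lt. lra. Qed.

Lemma hip_u n : hip (u n) (y n) = RtoC (hnorm (y n)).
Proof.
  unfold u. rewrite hip_scal_l, hip_xx, <- RtoC_mult, <- hnorm_sq.
  f_equal. pose proof (yp n). field. lra.
Qed.

Lemma hnorm_u n : hnorm (u n) = 1.
Proof.
  unfold u. rewrite hnorm_scal, Cmod_R, Rabs_pos_eq. pose proof (yp n). field. lra.
  pose proof (yp n). left. apply Rinv_0_lt_compat. lra.
Qed.

Let step n (x : H) : H :=
  let v := hadd x (hscal (RtoC (r n)) (u n)) in
  if Rle_dec (r n * hnorm (y n)) (Cmod (hip v (y n))) then v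
  else hsub x (hscal (RtoC (r n)) (u n)).

Fixpoint xs (n : nat) : H := match n with O => h0 | S n => step n (xs n) end.

Lemma xs_big n : r n * hnorm (y n) <= Cmod (hip (xs (S n)) (y n)).
Proof.
  simpl. unfold step. destruct Rle_dec as [E|E]; auto.
  apply Rnot_le_lt in E. rewrite hip_add_l, hip_scal_l, hip_u in E.
  unfold hsub. rewrite hip_add_l, hip_opp_l, hip_scal_l, hip_u.
  set (c := hip (xs n) (y n)) in *.
  assert (T : Cmod (Cminus (Cplus c (Cmult (RtoC (r n)) (RtoC (hnorm (y n)))))
                            (Cplus c (Copp (Cmult (RtoC (r n)) (RtoC (hnorm (y n)))))))
              <= Cmod (Cplus c (Cmult (RtoC (r n)) (RtoC (hnorm (y n)))))
                 + Cmod (Cplus c (Copp (Cmult (RtoC (r n)) (RtoC (hnorm (y n))))))).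
  { unfold Cminus. eapply Rle_trans. apply Cmod_triangle. rewrite Cmod_opp. lra. }
  replace (Cminus (Cplus c (Cmult (RtoC (r n)) (RtoC (hnorm (y n)))))
                            (Cplus c (Copp (Cmult (RtoC (r n)) (RtoC (hnorm (y n)))))))
    with (RtoC (2 * (r n * hnorm (y n)))) in T.
  2:{ rewrite !RtoC_mult. ring. }
  rewrite Cmod_R, Rabs_pos_eq in T.
  2:{ pose proof (r_pos n); pose proof (yp n). nra. }
  lra.
Qed.

Lemma xs_step n : hnorm (hsub (xs (S n)) (xs n)) = r n.
Proof.
  simpl. unfold step. destruct Rle_dec.
  - replace (hsub (hadd (xs n) (hscal (RtoC (r n)) (u n))) (xs n))
      with (hscal (RtoC (r n)) (u n)) by veqt.
    rewrite hnorm_scal, hnorm_u, Cmod_R, Rabs_pos_eq. ring. left; apply r_pos.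
  - replace (hsub (hsub (xs n) (hscal (RtoC (r n)) (u n))) (xs n))
      with (hscal (Copp (RtoC (r n))) (u n)) by veqt.
    rewrite hnorm_scal, hnorm_u, Cmod_opp, Cmod_R, Rabs_pos_eq. ring. left; apply r_pos.
Qed.

Lemma xs_dist n d : hnorm (hsub (xs (n + d)) (xs n)) <= /2 * (/3) ^ n * (1 - (/3) ^ d).
Proof.
  induction d.
  - rewrite Nat.add_0_r. replace (hsub (xs n) (xs n)) with (h0 : H) by veqt.
    rewrite hnorm_h0. simpl. lra.
  - eapply Rle_trans. apply (hnorm_sub_tri _ (xs (n + d))).
    replace (n + S d)%nat with (S (n + d)) by lia. rewrite xs_step.
    unfold r. replace ((/3)^(S (n+d))) with (/3 * (/3)^n * (/3)^d) by (simpl; rewrite pow_add; ring). replace ((/3)^(S d)) with (/3 * (/3)^d) by reflexivity.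
    pose proof (pow_lt (/3) n ltac:(lra)). pose proof (pow_lt (/3) d ltac:(lra)). nra.
Qed.

Lemma contra_false : False.
Proof.
  assert (Cau : forall eps, 0 < eps -> exists N, forall m n, (N <= m)%nat -> (N <= n)%nat ->
       sqrt (Re (hip (hadd (xs n) (hopp (xs m))) (hadd (xs n) (hopp (xs m))))) < eps).
  { intros eps He. destruct (pow_lt_1_zero (/3) ltac:(rewrite Rabs_pos_eq; lra) eps He) as [N HN].
    exists N. intros m n Hm Hn.
    change (hnorm (hsub (xs n) (xs m)) < eps).
    eapply Rle_lt_trans. apply (hnorm_sub_tri _ (xs N)).
    rewrite (hnorm_sub_sym (xs N)).
    replace n with (N + (n - N))%nat by lia. replace m with (N + (m - N))%nat by lia.
    pose proof (xs_dist N (n - N)). pose proof (xs_dist N (m - N)).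
    specialize (HN N (le_n N)). rewrite Rabs_pos_eq in HN by (left; apply pow_lt; lra).
    pose proof (pow_lt (/3) (n - N) ltac:(lra)). pose proof (pow_lt (/3) (m - N) ltac:(lra)).
    pose proof (pow_lt (/3) N ltac:(lra)). nra. }
  destruct (hcomplete xs Cau) as [l Hl].
  assert (Dl : forall n, hnorm (hsub l (xs (S n))) <= /2 * r n).
  { intros n. apply le_eps. intros eps He. destruct (Hl eps He) as [N HN].
    set (m := Nat.max N (S n)). specialize (HN m ltac:(unfold m; lia)).
    eapply Rle_trans. apply (hnorm_sub_tri _ (xs m)).
    rewrite hnorm_sub_sym. replace m with (S n + (m - S n))%nat by (unfold m; lia).
    pose proof (xs_dist (S n) (m - S n)). unfold r.
    pose proof (pow_lt (/3) (m - S n) ltac:(lra)). pose proof (pow_lt (/3) (S n) ltac:(lra)).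
    change (hnorm (hsub (xs m) l) < eps) in HN.
    replace m with (S n + (m - S n))%nat in HN by (unfold m; lia). nra. }
  destruct (Hw l) as [M HM].
  assert (Big : forall n, /2 * r n * hnorm (y n) <= M).
  { intros n. eapply Rle_trans; [|apply (HM (y n) (proj1 (Hy n)))].
    rewrite Cmod_hip_sym.
    replace (hip l (y n)) with (Cplus (hip (xs (S n)) (y n)) (hip (hsub l (xs (S n))) (y n)))
      by (hexp; ring).
    pose proof (xs_big n). pose proof (CS (hsub l (xs (S n))) (y n)).
    pose proof (Cmod_triangle (Cplus (hip (xs (S n)) (y n)) (hip (hsub l (xs (S n))) (y n)))
                  (Copp (hip (hsub l (xs (S n))) (y n)))).
    replace (Cplus (Cplus (hip (xs (S n)) (y n)) (hip (hsub l (xs (S n))) (y n)))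
                  (Copp (hip (hsub l (xs (S n))) (y n)))) with (hip (xs (S n)) (y n)) in H2 by ring.
    rewrite Cmod_opp in H2. pose proof (Dl n). pose proof (yp n). pose proof (r_pos n).
    pose proof (hnorm_ge0 (hsub l (xs (S n)))). nra. }
  destruct (archimed (18 * Rabs M)) as [A _].
  set (n := Z.to_nat (up (18 * Rabs M))).
  specialize (Big n). pose proof (pow43 n). pose proof (proj2 (Hy n)).
  assert (INR n >= 18 * Rabs M).
  { unfold n. rewrite INR_IZR_INZ, Z2Nat.id. lra. apply le_IZR. pose proof (Rabs_pos M). lra. }
  assert (E : r n * 4 ^ n = /3 * (4/3) ^ n).
  { unfold r. simpl. replace (4/3) with (4 * /3) by lra. rewrite Rpow_mult_distr. ring. }
  pose proof (r_pos n). pose proof (Rle_abs M). nra.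
Qed.
End Contra.

Lemma ubp : exists C, forall y, Sset y -> hnorm y <= C.
Proof.
  apply NNPP. intro NC.
  assert (Ex : forall n : nat, exists y, Sset y /\ 4 ^ n < hnorm y).
  { intros n. apply NNPP. intro K. apply NC. exists (4 ^ n). intros y Sy.
    apply Rnot_lt_le. intro L. apply K. eauto. }
  set (y := fun n => proj1_sig (constructive_indefinite_description _ (Ex n))).
  apply (contra_false y). intro n. unfold y. destruct constructive_indefinite_description. auto.
Qed.

End UBP.

Lemma bwb {H1 H2 : CHilbert} (D : H1 -> Prop) (L : H1 -> H2)
  (HD : forall a f, D f -> D (hscal a f))
  (HL : forall a f, D f -> L (hscal a f) = hscal a (L f))
  (Hw : forall k, exists M, forall f, D f -> Cmod (hip (L f) k) <= M * hnorm f) :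
  exists C, forall f, D f -> hnorm (L f) <= C * hnorm f.
Proof.
  set (Sset := fun y => exists f, D f /\ hnorm f <= 1 /\ y = L f).
  destruct (ubp Sset) as [C HC].
  { intros k. destruct (Hw k) as [M HM]. exists (Rabs M).
    intros y [f [Df [Nf ->]]]. eapply Rle_trans. apply HM; auto.
    pose proof (Rle_abs M). pose proof (Rabs_pos M). pose proof (hnorm_ge0 f). nra. }
  exists C. intros f Df.
  destruct (Req_dec (hnorm f) 0) as [E|E].
  - apply hnorm_0 in E. subst f.
    assert (E0: L h0 = h0). { transitivity (L (hscal (RtoC 0) h0)). rewrite hscal_0; reflexivity. rewrite HL by auto. apply hscal_0. }
    rewrite E0, !hnorm_h0. lra.
  - pose proof (hnorm_ge0 f). set (t := hnorm f) in *.
    assert (Ht : 0 < t) by lra.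
    assert (K : hnorm (L (hscal (RtoC (/ t)) f)) <= C).
    { apply HC. exists (hscal (RtoC (/t)) f). split; auto. split; auto.
      rewrite hnorm_scal, Cmod_R, Rabs_pos_eq. unfold t. right; field. auto.
      left. apply Rinv_0_lt_compat; auto. }
    rewrite HL, hnorm_scal, Cmod_R, Rabs_pos_eq in K by (auto || (left; apply Rinv_0_lt_compat; auto)).
    apply (Rmult_le_compat_l t) in K; [|lra].
    replace (t * (/ t * hnorm (L f))) with (hnorm (L f)) in K by (field; lra). lra.
Qed.

Section Proj.
Context {H : CHilbert}.

Definition hclosed (M : H -> Prop) : Prop :=
  forall x, (forall eps, 0 < eps -> exists y, M y /\ hnorm (hsub x y) < eps) -> M x.

Definition hsubsp (M : H -> Prop) : Prop :=
  M h0 /\ (forall x y, M x -> M y -> M (hadd x y)) /\ (forall a x, M x -> M (hscal a x)).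

Lemma exists_N_inv (e : R) : 0 < e -> exists N : nat, forall n, (N <= n)%nat -> / (INR n + 1) < e.
Proof.
  intros He. destruct (archimed (/ e)) as [A _].
  exists (Z.to_nat (up (/ e))). intros n Hn.
  assert (INR n >= / e).
  { apply le_INR in Hn. rewrite INR_IZR_INZ, Z2Nat.id in Hn. lra.
    apply le_IZR. pose proof (Rinv_0_lt_compat e He). lra. }
  pose proof (pos_INR n). pose proof (Rinv_0_lt_compat e He).
  apply (Rmult_lt_reg_l (INR n + 1)). lra. rewrite Rinv_r by lra.
  apply (Rmult_lt_reg_l (/e)). auto. replace (/ e * ((INR n + 1) * e)) with (INR n + 1) by (field; lra).
  lra.
Qed.

Variable N : H -> Prop.
Hypothesis HN : hsubsp N.
Hypothesis HNc : hclosed N.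
Variable z : H.

Lemma hnorm_lt (x : H) (r : R) : 0 < r -> nsq x < r * r -> hnorm x < r.
Proof.
  intros. apply Rnot_le_lt. intro K. pose proof (hnorm_sq x). pose proof (hnorm_ge0 x). nra.
Qed.

Lemma parallelogram (a b : H) :
  nsq (hsub a b) = 2 * nsq (hsub z a) + 2 * nsq (hsub z b)
                    - 4 * nsq (hsub z (hscal (RtoC (/2)) (hadd a b))).
Proof.
  unfold nsq.
  assert (E1 : hip (hsub a b) (hsub a b) =
     Cminus (Cplus (Cmult (RtoC 2) (hip (hsub z a) (hsub z a))) (Cmult (RtoC 2) (hip (hsub z b) (hsub z b))))
      (Cmult (RtoC 4) (hip (hsub z (hscal (RtoC (/2)) (hadd a b))) (hsub z (hscal (RtoC (/2)) (hadd a b)))))).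
  { hexp. rewrite RtoC_inv by lra. field. }
  rewrite E1. destruct (hip (hsub z a) (hsub z a)), (hip (hsub z b) (hsub z b)),
    (hip (hsub z (hscal (RtoC (/2)) (hadd a b))) (hsub z (hscal (RtoC (/2)) (hadd a b)))).
  unfold Cminus, Cplus, Cmult, Copp, RtoC, Re; simpl. ring.
Qed.

Lemma projection : exists p, N p /\ forall n, N n -> hip (hsub z p) n = RtoC 0.
Proof.
  pose proof HN as [N0 [Nadd Nscal]].
  set (E r := exists n, N n /\ r = - nsq (hsub z n)).
  assert (Eb : bound E).
  { exists 0. intros r [n [_ ->]]. pose proof (nsq_ge0 (hsub z n)). lra. }
  assert (Ene : exists r, E r).
  { exists (- nsq (hsub z h0)). exists h0. split; auto. }
  destruct (completeness E Eb Ene) as [m0 [U L]].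
  set (d := - m0).
  assert (d_low : forall n, N n -> d <= nsq (hsub z n)).
  { intros n Hn. specialize (U (- nsq (hsub z n)) (ex_intro _ n (conj Hn eq_refl))). unfold d. lra. }
  assert (d_approx : forall del, 0 < del -> exists n, N n /\ nsq (hsub z n) < d + del).
  { intros del Hd. apply NNPP. intro K.
    assert (is_upper_bound E (m0 - del)).
    { intros r [n [Hn ->]]. apply Rnot_lt_le. intro L2. apply K. exists n. split; auto. unfold d. lra. }
    specialize (L _ H0). lra. }
  assert (d0 : 0 <= d). { pose proof (d_low h0 N0). pose proof (nsq_ge0 (hsub z h0)). 
    destruct (d_approx 1 ltac:(lra)) as [n [Hn Hn2]]. 
    assert (0 <= d \/ d < 0) as [|] by lra; auto.
    destruct (d_approx (- d) ltac:(lra)) as [n' [Hn' Hn2']]. pose proof (nsq_ge0 (hsub z n')). lra. }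
  assert (Ex : forall j : nat, exists n, N n /\ nsq (hsub z n) < d + / (INR j + 1)).
  { intro j. apply d_approx. apply Rinv_0_lt_compat. pose proof (pos_INR j). lra. }
  set (s := fun j => proj1_sig (constructive_indefinite_description _ (Ex j))).
  assert (Hs : forall j, N (s j) /\ nsq (hsub z (s j)) < d + / (INR j + 1)).
  { intro j. unfold s. destruct constructive_indefinite_description. auto. }
  assert (Pc : forall i j, nsq (hsub (s i) (s j)) <= 2 * / (INR i + 1) + 2 * / (INR j + 1)).
  { intros i j. rewrite parallelogram.
    pose proof (d_low (hscal (RtoC (/2)) (hadd (s i) (s j)))
       ltac:(apply Nscal, Nadd; apply Hs)).
    pose proof (proj2 (Hs i)); pose proof (proj2 (Hs j)). lra. }
  assert (Cau : forall eps, 0 < eps -> exists M, forall m n, (M <= m)%nat -> (M <= n)%nat ->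
       sqrt (Re (hip (hadd (s n) (hopp (s m))) (hadd (s n) (hopp (s m))))) < eps).
  { intros eps He. destruct (exists_N_inv (eps * eps / 4) ltac:(nra)) as [M HM].
    exists M. intros m1 n Hm Hn. change (hnorm (hsub (s n) (s m1)) < eps).
    apply hnorm_lt; auto. specialize (Pc n m1). pose proof (HM n Hn). pose proof (HM m1 Hm). lra. }
  destruct (hcomplete s Cau) as [p Hp].
  assert (Np : N p).
  { apply HNc. intros eps He. destruct (Hp eps He) as [M HM]. exists (s M). split. apply Hs.
    rewrite hnorm_sub_sym. apply (HM M (le_n M)). }
  assert (Pmin : nsq (hsub z p) <= d).
  { apply le_eps. intros del Hdel.
    set (B := sqrt (d + 1)).
    assert (HB : 0 <= B) by apply sqrt_pos.
    assert (HB2 : B * B = d + 1) by (apply sqrt_sqrt; lra).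
    set (e0 := Rmin 1 (Rmin del 1 / (2 * (2 * B + 1)))).
    assert (He0 : 0 < e0).
    { unfold e0. apply Rmin_glb_lt. lra. apply Rdiv_lt_0_compat. apply Rmin_glb_lt; lra. lra. }
    destruct (Hp e0 He0) as [M1 HM1].
    destruct (exists_N_inv (Rmin del 1 / 2) ltac:(apply Rdiv_lt_0_compat; [apply Rmin_glb_lt|]; lra)) as [M2 HM2].
    set (j := Nat.max M1 M2).
    specialize (HM1 j ltac:(unfold j; lia)). specialize (HM2 j ltac:(unfold j; lia)).
    change (hnorm (hsub (s j) p) < e0) in HM1.
    pose proof (hnorm_sub_tri z (s j) p) as T.
    set (a := hnorm (hsub z (s j))) in *. set (e := hnorm (hsub (s j) p)) in *.
    assert (Ha : a * a < d + Rmin del 1 / 2).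
    { unfold a. rewrite hnorm_sq. pose proof (proj2 (Hs j)). lra. }
    assert (Ha0 : 0 <= a) by apply hnorm_ge0. assert (He' : 0 <= e) by apply hnorm_ge0.
    assert (HaB : a <= B). { apply le_of_sq; auto. pose proof (Rmin_r del 1). lra. }
    assert (e0le : e0 <= Rmin del 1 / (2 * (2 * B + 1))) by apply Rmin_r.
    assert (e01 : e0 <= 1) by apply Rmin_l.
    pose proof (Rmin_l del 1). pose proof (Rmin_r del 1).
    assert (e * (2 * B + 1) <= Rmin del 1 / 2).
    { apply Rle_trans with (e0 * (2 * B + 1)). nra.
      apply (Rmult_le_compat_r (2 * B + 1)) in e0le; [|lra].
      replace (Rmin del 1 / (2 * (2 * B + 1)) * (2 * B + 1)) with (Rmin del 1 / 2) in e0le by (field; lra).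
      lra. }
    rewrite <- hnorm_sq. pose proof (hnorm_ge0 (hsub z p)). nra. }
  exists p. split; auto.
  intros n Hn. set (w := hsub z p). set (c := hip w n).
  apply NNPP. intro Hc.
  assert (Cm : 0 < Cmod c) by (apply Cmod_gt_0; auto).
  destruct (Req_dec (nsq n) 0) as [Z|Z].
  { apply nsq_0 in Z. subst n. apply Hc. unfold c. apply hip_0_r. }
  pose proof (nsq_ge0 n).
  set (sc := / (nsq n + 1)).
  assert (Hsc : 0 < sc) by (apply Rinv_0_lt_compat; lra).
  assert (Hsc2 : sc * nsq n < 1).
  { unfold sc. apply (Rmult_lt_reg_l (nsq n + 1)). lra.
    replace ((nsq n + 1) * (/ (nsq n + 1) * nsq n)) with (nsq n) by (field; lra). lra. }
  set (t := Cmult (RtoC sc) c).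
  pose proof (d_low (hadd p (hscal t n)) ltac:(apply Nadd; auto)) as D.
  assert (Id : hip (hsub z (hadd p (hscal t n))) (hsub z (hadd p (hscal t n))) =
      Cplus (hip w w) (Cplus (Copp (Cmult (RtoC (2 * sc)) (Cmult c (Cconj c))))
         (Cmult (RtoC (sc * sc)) (Cmult (Cmult c (Cconj c)) (hip n n))))).
  { replace (hsub z (hadd p (hscal t n))) with (hsub w (hscal t n)) by (unfold w; veqt).
    hexp. rewrite (hip_conj n w). fold c. unfold t.
    rewrite Cmult_conj, Cconj_R, !RtoC_mult. ring. }
  unfold nsq at 1 in D. rewrite Id in D.
  rewrite <- Cmod2_conj, hip_xx, hip_xx in D.
  rewrite <- !RtoC_mult, <- RtoC_opp, <- !RtoC_plus in D. simpl in D.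
  fold w in Pmin. pose proof (pow_lt (Cmod c) 2 Cm). replace (Cmod c * (Cmod c * 1)) with (Cmod c ^ 2) in D by ring.
  assert (sc * Cmod c ^ 2 * (sc * nsq n - 2) < 0).
  { assert (0 < sc * Cmod c ^ 2) by (apply Rmult_lt_0_compat; auto).
    assert (sc * nsq n - 2 < 0) by lra. nra. }
  lra.
Qed.
End Proj.

Lemma riesz {H : CHilbert} (M : H -> Prop) (HM : hsubsp M) (HMc : hclosed M)
  (phi : H -> C)
  (Hlin : forall a f g, M f -> M g -> phi (hadd (hscal a f) g) = Cplus (Cmult a (phi f)) (phi g))
  (Hb : exists c, forall f, M f -> Cmod (phi f) <= c * hnorm f) :
  exists v, forall g, M g -> phi g = hip g v.
Proof.
  pose proof HM as [M0 [Madd Mscal]].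
  destruct Hb as [c Hc].
  assert (P0 : phi h0 = RtoC 0).
  { assert (K := Hlin (RtoC 1) h0 h0 M0 M0). rewrite hscal_1, hadd_0 in K.
    replace (phi h0) with (Cminus (Cplus (Cmult (RtoC 1) (phi h0)) (phi h0)) (phi h0)) at 1 by ring.
    rewrite <- K. ring. }
  assert (Psc : forall a f, M f -> phi (hscal a f) = Cmult a (phi f)).
  { intros a f Mf. rewrite <- (hadd_0 (hscal a f)), Hlin, P0 by auto. ring. }
  assert (Psub : forall x y, M x -> M y -> phi (hsub x y) = Cminus (phi x) (phi y)).
  { intros x y Mx My.
    replace (hsub x y) with (hadd (hscal (Copp (RtoC 1)) y) x) by veqt.
    rewrite Hlin by auto. ring. }
  assert (Msub : forall x y, M x -> M y -> M (hsub x y)).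
  { intros x y Mx My. unfold hsub. rewrite hopp_scal. auto. }
  destruct (classic (exists z, M z /\ phi z <> RtoC 0)) as [[z [Mz Pz]]|NZ].
  2:{ exists h0. intros g Mg. rewrite hip_0_r. apply NNPP. intro K. apply NZ. eauto. }
  set (N := fun g => M g /\ phi g = RtoC 0).
  assert (HN : hsubsp N).
  { split; [|split].
    - split; auto.
    - intros x y [Mx Px] [My Py]. split; auto. rewrite <- (hscal_1 x), Hlin, Px, Py by auto. ring.
    - intros a x [Mx Px]. split; auto. rewrite Psc, Px by auto. ring. }
  assert (HNc : hclosed N).
  { intros x Hx. assert (Mx : M x).
    { apply HMc. intros eps He. destruct (Hx eps He) as [y [[My _] Hy]]. eauto. }
    split; auto. apply Ceq_of_small. intros eps He.
    destruct (Hx (eps / (Rabs c + 1))) as [y [[My Py] Hy]].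
    { apply Rdiv_lt_0_compat; auto. pose proof (Rabs_pos c); lra. }
    replace (Cminus (phi x) (RtoC 0)) with (phi (hsub x y)) by (rewrite Psub, Py by auto; ring).
    eapply Rle_trans. apply Hc; auto.
    pose proof (Rle_abs c). pose proof (Rabs_pos c). pose proof (hnorm_ge0 (hsub x y)).
    apply Rle_trans with (Rabs c * (eps / (Rabs c + 1))). nra.
    apply Rle_trans with ((Rabs c + 1) * (eps / (Rabs c + 1))). nra.
    right. field. lra. }
  destruct (projection N HN HNc z) as [p [[Mp Pp] Orth]].
  set (w := hsub z p).
  assert (Mw : M w) by (apply Msub; auto).
  assert (Pw : phi w = phi z) by (unfold w; rewrite Psub, Pp by auto; ring).
  assert (Nw : nsq w <> 0).
  { intro K. apply nsq_0 in K. rewrite K, P0 in Pw. auto. }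
  exists (hscal (Cdiv (Cconj (phi w)) (RtoC (nsq w))) w).
  intros g Mg.
  assert (Ng : N (hsub g (hscal (Cdiv (phi g) (phi w)) w))).
  { split. apply Msub; auto. rewrite Psub, Psc by auto. field. rewrite Pw; auto. }
  specialize (Orth _ Ng). fold w in Orth.
  assert (O2 : hip (hsub g (hscal (Cdiv (phi g) (phi w)) w)) w = RtoC 0).
  { rewrite hip_conj, Orth. apply Cconj_R. }
  revert O2. hexp. rewrite hip_xx. intro O2.
  rewrite Cdiv_conj, Cconj_conj, Cconj_R by (intro K; injection K; auto).
  assert (hip g w = Cmult (Cdiv (phi g) (phi w)) (RtoC (nsq w))).
  { replace (hip g w) with (Cplus (Cplus (hip g w) (Copp (Cmult (Cdiv (phi g) (phi w)) (RtoC (nsq w)))))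
       (Cmult (Cdiv (phi g) (phi w)) (RtoC (nsq w)))) by ring. rewrite O2. ring. }
  rewrite H0. field. split. rewrite Pw; auto. intro K; apply Nw; injection K; auto.
Qed.

Section GLin.
Variables (h K : CHilbert) (Astar : lrel h) (G : h * h -> K).
Hypothesis HS : is_subspace Astar.
Hypothesis HG : forall a f g, Astar f -> Astar g ->
  G (padd (pscal a f) g) = hadd (hscal a (G f)) (G g).

Lemma G_zero : G (h0, h0) = h0.
Proof.
  destruct HS as [S0 _].
  apply hadd_self_0. pose proof (HG (RtoC 1) (h0,h0) (h0,h0) S0 S0) as E.
  unfold padd, pscal in E; simpl in E. rewrite !hscal_1, hadd_0 in E. symmetry. exact E.
Qed.

Lemma G_scal a f : Astar f -> G (pscal a f) = hscal a (G f).
Proof.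
  intro Hf. destruct HS as [S0 _].
  pose proof (HG a f (h0,h0) Hf S0) as E. rewrite G_zero, hadd_0 in E.
  rewrite <- E. f_equal. unfold padd, pscal; simpl. rewrite !hadd_0. destruct f; reflexivity.
Qed.

Lemma G_add f g : Astar f -> Astar g -> G (padd f g) = hadd (G f) (G g).
Proof.
  intros Hf Hg. pose proof (HG (RtoC 1) f g Hf Hg) as E. rewrite hscal_1 in E.
  rewrite <- E. f_equal. unfold padd, pscal; simpl. rewrite !hscal_1. destruct f; reflexivity.
Qed.

Lemma G_sub f g : Astar f -> Astar g -> G (psub f g) = hsub (G f) (G g).
Proof.
  intros Hf Hg. pose proof (HG (Copp (RtoC 1)) g f Hg Hf) as E.
  replace (psub f g) with (padd (pscal (Copp (RtoC 1)) g) f).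
  rewrite E. veqt. unfold psub, padd, pscal. simpl. f_equal; veqt.
Qed.

End GLin.

Lemma hnorm_fst_le {h : CHilbert} (f : h * h) : hnorm (fst f) <= pnorm f.
Proof.
  unfold pnorm. rewrite <- (sqrt_pow2 (hnorm (fst f))) at 1 by apply hnorm_ge0.
  apply sqrt_le_1_alt. pose proof (pow2_ge_0 (hnorm (snd f))). lra.
Qed.

Lemma hnorm_snd_le {h : CHilbert} (f : h * h) : hnorm (snd f) <= pnorm f.
Proof.
  unfold pnorm. rewrite <- (sqrt_pow2 (hnorm (snd f))) at 1 by apply hnorm_ge0.
  apply sqrt_le_1_alt. pose proof (pow2_ge_0 (hnorm (fst f))). lra.
Qed.

Lemma pnorm_ge0 {h : CHilbert} (f : h * h) : 0 <= pnorm f.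
Proof. apply sqrt_pos. Qed.

Lemma Cmod_minus_le (a b : C) : Cmod (Cminus a b) <= Cmod a + Cmod b.
Proof. unfold Cminus. eapply Rle_trans. apply Cmod_triangle. rewrite Cmod_opp. lra. Qed.

Lemma kform_bound {h : CHilbert} (f g : h * h) : Cmod (kform f g) <= 2 * pnorm f * pnorm g.
Proof.
  unfold kform. eapply Rle_trans. apply (Cmod_minus_le (hip (snd f) (fst g)) (hip (fst f) (snd g))).
  pose proof (CS (snd f) (fst g)). pose proof (CS (fst f) (snd g)).
  pose proof (hnorm_fst_le f). pose proof (hnorm_snd_le f).
  pose proof (hnorm_fst_le g). pose proof (hnorm_snd_le g).
  pose proof (hnorm_ge0 (fst f)). pose proof (hnorm_ge0 (snd f)).
  pose proof (hnorm_ge0 (fst g)). pose proof (hnorm_ge0 (snd g)).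
  apply Rle_trans with (pnorm f * pnorm g + pnorm f * pnorm g); [|lra].
  apply Rplus_le_compat. eapply Rle_trans; [eassumption|]. apply Rmult_le_compat; auto.
  eapply Rle_trans; [eassumption|]. apply Rmult_le_compat; auto.
Qed.

Lemma psub_eq {h : CHilbert} (f g : h * h) : psub f g = padd (pscal (Copp (RtoC 1)) g) f.
Proof. unfold psub, padd, pscal. simpl. f_equal; veqt. Qed.

Section Main.
Variables (h K : CHilbert) (A : lrel h) (Astar : lrel h) (G0 G1 : h * h -> K).
Hypothesis HU : unitary_boundary_triple A K Astar G0 G1.

Let Gm f := (G0 f, G1 f).

Lemma As_sub : is_subspace Astar.
Proof. apply HU. Qed.

Lemma HG0 : forall a f g, Astar f -> Astar g ->
  G0 (padd (pscal a f) g) = hadd (hscal a (G0 f)) (G0 g).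
Proof. intros. apply HU; auto. Qed.
Lemma HG1 : forall a f g, Astar f -> Astar g ->
  G1 (padd (pscal a f) g) = hadd (hscal a (G1 f)) (G1 g).
Proof. intros. apply HU; auto. Qed.

Lemma green f g : Astar f -> Astar g -> kform (G0 g, G1 g) (G0 f, G1 f) = kform g f.
Proof.
  intros Hf Hg. destruct HU as [_ [_ [Hu _]]].
  apply (proj2 (Hu (G0 f, G1 f) f) (conj Hf eq_refl)). auto.
Qed.

Lemma maxim k f : (forall g, Astar g -> kform (G0 g, G1 g) k = kform g f) ->
  Astar f /\ k = (G0 f, G1 f).
Proof.
  intros E. destruct HU as [_ [_ [Hu _]]]. apply (proj1 (Hu k f)). exact E.
Qed.

Lemma As_adj f : Astar f -> adjoint A f.
Proof.
  intro Hf. destruct HU as [_ [_ [_ Hc]]]. apply Hc. intros eps He. exists f. split; auto.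
  unfold pnorm, psub. simpl. replace (hsub (fst f) (fst f)) with (h0 : h) by veqt.
  replace (hsub (snd f) (snd f)) with (h0 : h) by veqt. rewrite hnorm_h0.
  replace (0 * (0 * 1) + 0 * (0 * 1)) with 0 by ring. rewrite sqrt_0. auto.
Qed.

Lemma Pscal a f : Astar f -> Astar (pscal a f).
Proof. intros. apply As_sub; auto. Qed.

Lemma Psub f g : Astar f -> Astar g -> Astar (psub f g).
Proof. intros. rewrite psub_eq. destruct As_sub as [_ [Ha Hs]]. apply Ha; auto. Qed.

Lemma Padd f g : Astar f -> Astar g -> Astar (padd f g).
Proof. intros. destruct As_sub as [_ [Ha Hs]]. apply Ha; auto. Qed.

Lemma bnd_of_weak (G : h * h -> K)
  (HG : forall a f g, Astar f -> Astar g -> G (padd (pscal a f) g) = hadd (hscal a (G f)) (G g))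
  (Hw : forall k, exists M, forall f, Astar f -> Cmod (hip (G f) k) <= M * pnorm f) :
  bounded_on Astar G.
Proof.
  destruct (bwb (H1 := prodH h) Astar G) as [C HC].
  - intros a f Hf. apply Pscal; auto.
  - intros a f Hf. apply (G_scal h K Astar G As_sub HG a f Hf).
  - intros k. destruct (Hw k) as [M HM]. exists M. intros f Hf. rewrite <- pnorm_eq. auto.
  - exists C. intros f Hf. rewrite pnorm_eq. auto.
Qed.

Lemma weak_G1 : bounded_on Astar G0 -> range_full Astar G0 ->
  forall k, exists M, forall f, Astar f -> Cmod (hip (G1 f) k) <= M * pnorm f.
Proof.
  intros [c0 Hc0] R0 k. destruct (R0 k) as [g [Hg Eg]].
  exists (2 * pnorm g + Rabs c0 * hnorm (G1 g)). intros f Hf.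
  assert (Gr : Cplus (hip (G1 f) k) (Copp (hip (G0 f) (G1 g))) = kform f g)
    by (rewrite <- Eg; exact (green g f Hg Hf)).
  replace (hip (G1 f) k) with (Cplus (kform f g) (hip (G0 f) (G1 g)))
    by (rewrite <- Gr; ring).
  eapply Rle_trans. apply Cmod_triangle.
  pose proof (kform_bound f g). pose proof (CS (G0 f) (G1 g)). pose proof (Hc0 f Hf).
  pose proof (hnorm_ge0 (G1 g)). pose proof (hnorm_ge0 (G0 f)). pose proof (pnorm_ge0 f).
  pose proof (Rle_abs c0). pose proof (Rabs_pos c0).
  assert (hnorm (G0 f) * hnorm (G1 g) <= Rabs c0 * pnorm f * hnorm (G1 g)).
  { apply Rmult_le_compat_r; auto. eapply Rle_trans; [apply Hc0; auto|]. apply Rmult_le_compat_r; auto. }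
  nra.
Qed.

Lemma weak_G0 : bounded_on Astar G1 -> range_full Astar G1 ->
  forall k, exists M, forall f, Astar f -> Cmod (hip (G0 f) k) <= M * pnorm f.
Proof.
  intros [c1 Hc1] R1 k. destruct (R1 k) as [g [Hg Eg]].
  exists (2 * pnorm g + Rabs c1 * hnorm (G0 g)). intros f Hf.
  assert (Gr : Cplus (hip (G1 f) (G0 g)) (Copp (hip (G0 f) k)) = kform f g)
    by (rewrite <- Eg; exact (green g f Hg Hf)).
  replace (hip (G0 f) k) with (Cminus (hip (G1 f) (G0 g)) (kform f g))
    by (rewrite <- Gr; ring).
  eapply Rle_trans. apply Cmod_minus_le.
  pose proof (kform_bound f g). pose proof (CS (G1 f) (G0 g)). pose proof (Hc1 f Hf).
  pose proof (hnorm_ge0 (G0 g)). pose proof (hnorm_ge0 (G1 f)). pose proof (pnorm_ge0 f).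
  pose proof (Rle_abs c1). pose proof (Rabs_pos c1).
  assert (hnorm (G1 f) * hnorm (G0 g) <= Rabs c1 * pnorm f * hnorm (G0 g)).
  { apply Rmult_le_compat_r; auto. eapply Rle_trans; [apply Hc1; auto|]. apply Rmult_le_compat_r; auto. }
  nra.
Qed.


Lemma As_closed : bounded_on Astar G0 -> bounded_on Astar G1 ->
  forall f, pclosure Astar f -> Astar f.
Proof.
  intros [c0 Hc0] [c1 Hc1] f Hf.
  set (a0 := Rabs c0 + 1). set (a1 := Rabs c1 + 1).
  assert (Ha0 : 0 < a0) by (unfold a0; pose proof (Rabs_pos c0); lra).
  assert (Ha1 : 0 < a1) by (unfold a1; pose proof (Rabs_pos c1); lra).
  assert (B0 : forall x, Astar x -> hnorm (G0 x) <= a0 * pnorm x).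
  { intros x Hx. eapply Rle_trans. apply Hc0; auto. apply Rmult_le_compat_r. apply pnorm_ge0.
    unfold a0; pose proof (Rle_abs c0); lra. }
  assert (B1 : forall x, Astar x -> hnorm (G1 x) <= a1 * pnorm x).
  { intros x Hx. eapply Rle_trans. apply Hc1; auto. apply Rmult_le_compat_r. apply pnorm_ge0.
    unfold a1; pose proof (Rle_abs c1); lra. }
  assert (Ex : forall n : nat, exists g, Astar g /\ pnorm (psub f g) < / (INR n + 1)).
  { intro n. apply Hf. apply Rinv_0_lt_compat. pose proof (pos_INR n). lra. }
  set (s := fun n => proj1_sig (constructive_indefinite_description _ (Ex n))).
  assert (Hs : forall n, Astar (s n) /\ pnorm (psub f (s n)) < / (INR n + 1)).
  { intro n. unfold s. destruct constructive_indefinite_description. auto. }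
  assert (Dsub : forall n m, pnorm (psub (s n) (s m)) <= / (INR n + 1) + / (INR m + 1)).
  { intros n m. pose proof (hnorm_sub_tri (H := prodH h) (s n) f (s m)) as T.
    pose proof (hnorm_sub_sym (H := prodH h) (s n) f) as T2.
    repeat rewrite <- pnorm_eq in T. repeat rewrite <- pnorm_eq in T2.
    change (pnorm (psub (s n) (s m)) <= pnorm (psub (s n) f) + pnorm (psub f (s m))) in T.
    change (pnorm (psub (s n) f) = pnorm (psub f (s n))) in T2.
    pose proof (proj2 (Hs n)). pose proof (proj2 (Hs m)). lra. }
  assert (Cau : forall (G : h * h -> K) (a : R), 0 < a -> (forall x, Astar x -> hnorm (G x) <= a * pnorm x) ->
     (forall a f g, Astar f -> Astar g -> G (padd (pscal a f) g) = hadd (hscal a (G f)) (G g)) ->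
     forall eps, 0 < eps -> exists N, forall m n, (N <= m)%nat -> (N <= n)%nat ->
       sqrt (Re (hip (hadd (G (s n)) (hopp (G (s m)))) (hadd (G (s n)) (hopp (G (s m)))))) < eps).
  { intros G a Ha BG HG eps He. destruct (exists_N_inv (eps / (2 * a))) as [N HN].
    { apply Rdiv_lt_0_compat; lra. }
    exists N. intros m n Hm Hn. change (hnorm (hsub (G (s n)) (G (s m))) < eps).
    rewrite <- (G_sub h K Astar G HG) by apply Hs.
    eapply Rle_lt_trans. apply BG. apply Psub; apply Hs.
    pose proof (Dsub n m). pose proof (HN n Hn). pose proof (HN m Hm).
    apply Rle_lt_trans with (a * (/ (INR n + 1) + / (INR m + 1))).
    apply Rmult_le_compat_l; lra.
    apply Rlt_le_trans with (a * (eps / (2 * a) + eps / (2 * a))).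
    apply Rmult_lt_compat_l; lra. right; field; lra. }
  destruct (hcomplete (fun n => G0 (s n)) (Cau G0 a0 Ha0 B0 HG0)) as [k0 L0].
  destruct (hcomplete (fun n => G1 (s n)) (Cau G1 a1 Ha1 B1 HG1)) as [k1 L1].
  enough (E : forall g, Astar g -> kform (G0 g, G1 g) (k0, k1) = kform g f)
    by (apply (maxim _ _ E)).
  intros g Hg. apply Ceq_of_small. intros eps He.
  set (Q := hnorm (G1 g) + hnorm (G0 g) + 2 * pnorm g + 1).
  assert (HQ : 0 < Q).
  { unfold Q. pose proof (hnorm_ge0 (G1 g)); pose proof (hnorm_ge0 (G0 g)); pose proof (pnorm_ge0 g). lra. }
  set (del := eps / Q). assert (Hdel : 0 < del) by (apply Rdiv_lt_0_compat; lra).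
  destruct (L0 del Hdel) as [N0 HN0]. destruct (L1 del Hdel) as [N1 HN1].
  destruct (exists_N_inv del Hdel) as [N2 HN2].
  set (n := Nat.max N0 (Nat.max N1 N2)).
  specialize (HN0 n ltac:(unfold n; lia)). specialize (HN1 n ltac:(unfold n; lia)).
  specialize (HN2 n ltac:(unfold n; lia)).
  change (hnorm (hsub (G0 (s n)) k0) < del) in HN0.
  change (hnorm (hsub (G1 (s n)) k1) < del) in HN1.
  rewrite hnorm_sub_sym in HN0, HN1.
  pose proof (proj2 (Hs n)) as Pn. destruct (Hs n) as [Sn _].
  assert (Id : Cminus (kform (G0 g, G1 g) (k0, k1)) (kform g f) =
     Cplus (Cminus (kform (G0 g, G1 g) (G0 (s n), G1 (s n))) (kform g (s n)))
       (Cminus (kform (G0 g, G1 g) (hsub k0 (G0 (s n)), hsub k1 (G1 (s n)))) (kform g (psub f (s n))))).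
  { unfold kform, psub. simpl. hexp. ring. }
  rewrite Id, (green (s n) g Sn Hg).
  replace (Cminus (kform g (s n)) (kform g (s n))) with (RtoC 0) by ring.
  rewrite Cplus_0_l.
  eapply Rle_trans. apply Cmod_minus_le.
  pose proof (kform_bound g (psub f (s n))).
  assert (K1 : Cmod (kform (G0 g, G1 g) (hsub k0 (G0 (s n)), hsub k1 (G1 (s n))))
              <= hnorm (G1 g) * del + hnorm (G0 g) * del).
  { unfold kform. simpl. eapply Rle_trans. apply Cmod_minus_le.
    pose proof (CS (G1 g) (hsub k0 (G0 (s n)))). pose proof (CS (G0 g) (hsub k1 (G1 (s n)))).
    pose proof (hnorm_ge0 (G1 g)); pose proof (hnorm_ge0 (G0 g)). nra. }
  pose proof (pnorm_ge0 g). pose proof (pnorm_ge0 (psub f (s n))).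
  assert (Cmod (kform g (psub f (s n))) <= 2 * pnorm g * del) by nra.
  assert (del * Q = eps) by (unfold del; field; lra).
  unfold Q in *. nra.
Qed.

Lemma As_hsubsp : hsubsp (H := prodH h) Astar.
Proof.
  destruct As_sub as [S0 [Sa Ss]]. split; [exact S0|split].
  - intros x y Hx Hy. exact (Sa x y Hx Hy).
  - intros a x Hx. exact (Ss a x Hx).
Qed.

Lemma As_hclosed : (forall f, pclosure Astar f -> Astar f) -> hclosed (H := prodH h) Astar.
Proof.
  intros Cl x Hx. apply Cl. intros eps He. destruct (Hx eps He) as [y [Hy Ny]].
  exists y. split; auto. rewrite pnorm_eq. exact Ny.
Qed.

Lemma surj_aux (G : h * h -> K) (k : K)
  (HG : forall a f g, Astar f -> Astar g -> G (padd (pscal a f) g) = hadd (hscal a (G f)) (G g))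
  (Cl : forall f, pclosure Astar f -> Astar f) (Bd : bounded_on Astar G)
  (c : C) : exists v : h * h, forall g, Astar g ->
     Cmult c (hip (G g) k) = Cplus (hip (fst g) (fst v)) (hip (snd g) (snd v)).
Proof.
  destruct Bd as [c0 Hc0].
  destruct (riesz (H := prodH h) Astar As_hsubsp (As_hclosed Cl) (fun g => Cmult c (hip (G g) k)))
    as [v Hv].
  - intros a f g Hf Hg. change (Cmult c (hip (G (padd (pscal a f) g)) k) =
       Cplus (Cmult a (Cmult c (hip (G f) k))) (Cmult c (hip (G g) k))).
    rewrite HG by auto. rewrite hip_add_l, hip_scal_l. ring.
  - exists (Cmod c * Rabs c0 * hnorm k). intros f Hf. rewrite Cmod_mult.
    pose proof (CS (G f) k). pose proof (Hc0 f Hf). rewrite <- pnorm_eq.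
    pose proof (Cmod_ge_0 c). pose proof (hnorm_ge0 k). pose proof (hnorm_ge0 (G f)).
    pose proof (pnorm_ge0 f). pose proof (Rle_abs c0).
    assert (hnorm (G f) <= Rabs c0 * pnorm f) by nra.
    assert (Cmod (hip (G f) k) <= Rabs c0 * pnorm f * hnorm k) by nra.
    nra.
  - exists v. intros g Hg. rewrite (Hv g Hg). reflexivity.
Qed.

Lemma surj0 : (forall f, pclosure Astar f -> Astar f) -> bounded_on Astar G0 ->
  forall k, exists f, Astar f /\ G0 f = h0 /\ G1 f = k.
Proof.
  intros Cl Bd k. destruct (surj_aux G0 k HG0 Cl Bd (Copp (RtoC 1))) as [v Hv].
  destruct (maxim (h0, k) (snd v, hopp (fst v))) as [Hf E].
  - intros g Hg. unfold kform. simpl. rewrite hip_0_r, hip_opp_r.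
    pose proof (Hv g Hg). rewrite Cplus_0_l.
    replace (Copp (hip (G0 g) k)) with (Cmult (Copp (RtoC 1)) (hip (G0 g) k)) by ring.
    rewrite H. ring.
  - exists (snd v, hopp (fst v)). injection E. intros. auto.
Qed.

Lemma surj1 : (forall f, pclosure Astar f -> Astar f) -> bounded_on Astar G1 ->
  forall k, exists f, Astar f /\ G0 f = k /\ G1 f = h0.
Proof.
  intros Cl Bd k. destruct (surj_aux G1 k HG1 Cl Bd (RtoC 1)) as [v Hv].
  destruct (maxim (k, h0) (snd v, hopp (fst v))) as [Hf E].
  - intros g Hg. unfold kform. simpl. rewrite hip_0_r, hip_opp_r.
    pose proof (Hv g Hg).
    replace (hip (G1 g) k) with (Cmult (RtoC 1) (hip (G1 g) k)) by ring.
    rewrite H. ring.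
  - exists (snd v, hopp (fst v)). injection E. intros. auto.
Qed.

Lemma ord_of : bounded_on Astar G0 -> bounded_on Astar G1 ->
  (range_full Astar G0 \/ range_full Astar G1) -> ordinary_boundary_triple A K Astar G0 G1.
Proof.
  intros B0 B1 R.
  pose proof (As_closed B0 B1) as Cl.
  destruct HU as [_ [_ [_ Hc]]].
  assert (Eq : forall f, Astar f <-> adjoint A f).
  { intros f. split. apply As_adj. intro Hf. apply Cl. apply Hc. exact Hf. }
  split; [exact Eq|split; [|split]].
  - intros a f g Hf Hg. apply Eq in Hf. apply Eq in Hg. split; [apply HG0|apply HG1]; auto.
  - intros f g Hf Hg. apply Eq in Hf. apply Eq in Hg.
    symmetry. exact (green g f Hg Hf).
  - intros k0 k1. destruct R as [R0|R1].
    + destruct (R0 k0) as [u [Hu Eu]].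
      destruct (surj0 Cl B0 (hsub k1 (G1 u))) as [f [Hf [E0 E1]]].
      exists (padd f u). split. apply Eq, Padd; auto.
      rewrite (G_add h K Astar G0 HG0 f u Hf Hu), (G_add h K Astar G1 HG1 f u Hf Hu).
      rewrite E0, E1, Eu. split. apply hadd_0l. veqt.
    + destruct (R1 k1) as [u [Hu Eu]].
      destruct (surj1 Cl B1 (hsub k0 (G0 u))) as [f [Hf [E0 E1]]].
      exists (padd f u). split. apply Eq, Padd; auto.
      rewrite (G_add h K Astar G0 HG0 f u Hf Hu), (G_add h K Astar G1 HG1 f u Hf Hu).
      rewrite E0, E1, Eu. split. veqt. apply hadd_0l.
Qed.

Lemma of_ord : ordinary_boundary_triple A K Astar G0 G1 ->
  bounded_on Astar G0 /\ bounded_on Astar G1 /\ range_full Astar G0 /\ range_full Astar G1.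
Proof.
  intros [Eq [_ [_ Sj]]].
  assert (R0 : range_full Astar G0).
  { intros k. destruct (Sj k h0) as [f [Hf [E _]]]. exists f. split; auto. apply Eq; auto. }
  assert (R1 : range_full Astar G1).
  { intros k. destruct (Sj h0 k) as [f [Hf [_ E]]]. exists f. split; auto. apply Eq; auto. }
  assert (B0 : bounded_on Astar G0).
  { apply bnd_of_weak. apply HG0. intros k.
    destruct (Sj h0 k) as [g [Hg [E0 E1]]]. apply Eq in Hg.
    exists (2 * pnorm g). intros f Hf.
    pose proof (green g f Hg Hf) as Gr. unfold kform in Gr. simpl in Gr.
    rewrite E0, E1, hip_0_r in Gr. rewrite Cplus_0_l in Gr.
    rewrite <- Cmod_opp. fold (kform f g) in Gr. rewrite Gr.
    pose proof (kform_bound f g). lra. }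
  assert (B1 : bounded_on Astar G1).
  { apply bnd_of_weak. apply HG1. intros k.
    destruct (Sj k h0) as [g [Hg [E0 E1]]]. apply Eq in Hg.
    exists (2 * pnorm g). intros f Hf.
    pose proof (green g f Hg Hf) as Gr. unfold kform in Gr. simpl in Gr.
    rewrite E0, E1, hip_0_r in Gr.
    replace (Cplus (hip (G1 f) k) (Copp (RtoC 0))) with (hip (G1 f) k) in Gr by ring.
    fold (kform f g) in Gr. rewrite Gr.
    pose proof (kform_bound f g). lra. }
  auto.
Qed.

Theorem main_sec :
  ((bounded_on Astar G0 /\ range_full Astar G0) <->
     ordinary_boundary_triple A K Astar G0 G1) /\
  ((bounded_on Astar G1 /\ range_full Astar G1) <->
     ordinary_boundary_triple A K Astar G0 G1).
Proof.
  split; split.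
  - intros [B0 R0]. apply ord_of; auto.
    apply bnd_of_weak. apply HG1. apply weak_G1; auto.
  - intro O. destruct (of_ord O) as [? [? [? ?]]]. auto.
  - intros [B1 R1]. apply ord_of; auto.
    apply bnd_of_weak. apply HG0. apply weak_G0; auto.
  - intro O. destruct (of_ord O) as [? [? [? ?]]]. auto.
Qed.

End Main.

Theorem mainTheorem15 (h K : CHilbert) (A : lrel h)
  (HA : closed_symmetric A)
  (Astar : lrel h) (G0 G1 : h * h -> K)
  (HU : unitary_boundary_triple A K Astar G0 G1) :
  ((bounded_on Astar G0 /\ range_full Astar G0) <->
     ordinary_boundary_triple A K Astar G0 G1) /\
  ((bounded_on Astar G1 /\ range_full Astar G1) <->
     ordinary_boundary_triple A K Astar G0 G1).
Proof.
  exact (main_sec h K A Astar G0 G1 HU).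
Qed.
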